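(* Let $K$ be a field, $n\ge1$, $R=K[x_1,\ldots,x_{2n+1}]$, and let $C_{2n+1}$ be the cycle graph with vertices $x_1,\ldots,x_{2n+1}$ and edges $\{x_i,x_{i+1}\}$ for $i=1,\ldots,2n$ and $\{x_{2n+1},x_1\}$. Then the edge ideal $I(C_{2n+1})=(x_1x_2,x_2x_3,\ldots,x_{2n}x_{2n+1},x_{2n+1}x_1)\subset R$ has the nearly copersistence property.
   Context: A monomial ideal $I\subset R$ has the nearly copersistence property if there exist a positive integer $s$ and a monomial prime ideal $\mathfrak{p}$ such that $\mathrm{Ass}_R(R/I^m)\cup\{\mathfrak{p}\}\supseteq\mathrm{Ass}_R(R/I^{m+1})$ for all $1\le m\le s$, and $\mathrm{Ass}_R(R/I^m)\supseteq\mathrm{Ass}_R(R/I^{m+1})$ for all $m\ge s+1$. *)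

(* Defs.v *)
From HB Require Import structures.
From mathcomp Require Import all_boot all_order all_algebra.
From mathcomp Require Import mpoly.
Set Implicit Arguments. Unset Strict Implicit. Unset Printing Implicit Defensive.
Import GRing.Theory.
Local Open Scope ring_scope.

(* Subsets of the polynomial ring R = K[x_0, ..., x_{N-1}] are predicates. *)
Section Ideals.
Variables (K : fieldType) (N : nat).
Notation R := {mpoly K[N]}.

Inductive ideal_gen (S : R -> Prop) : R -> Prop :=
| ideal_gen0 : ideal_gen S 0
| ideal_genD (c g f : R) : S g -> ideal_gen S f -> ideal_gen S (f + c * g).

Definition ideal_mul (I J : R -> Prop) : R -> Prop :=
  ideal_gen (fun h => exists f g, I f /\ J g /\ h = f * g).

Fixpoint ideal_pow (I : R -> Prop) (m : nat) : R -> Prop :=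
  match m with
  | 0 => fun _ => True
  | m'.+1 => ideal_mul (ideal_pow I m') I
  end.

Definition is_ideal (P : R -> Prop) : Prop :=
  P 0 /\ (forall f g, P f -> P g -> P (f + g)) /\ (forall c f, P f -> P (c * f)).

Definition is_prime (P : R -> Prop) : Prop :=
  is_ideal P /\ ~ P 1 /\ (forall f g, P (f * g) -> P f \/ P g).

(* P \in Ass_R(R/I): P is a prime ideal of the form (I : f) for some f in R. *)
Definition Ass (I : R -> Prop) (P : R -> Prop) : Prop :=
  is_prime P /\ exists f : R, forall g, P g <-> I (g * f).

Definition monomial_prime (P : R -> Prop) : Prop :=
  is_prime P /\
  exists S : {set 'I_N},
    forall g, P g <-> ideal_gen (fun h => exists2 i, i \in S & h = 'X_i) g.

Definition edge_ideal (e : rel 'I_N) : R -> Prop :=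
  ideal_gen (fun h => exists i j, e i j /\ h = 'X_i * 'X_j).

(* Nearly copersistence property of I. Ass sets are compared elementwise;
   "P = p" for ideals is extensional equality of the underlying sets. *)
Definition nearly_copersistent (I : R -> Prop) : Prop :=
  exists (s : nat) (p : R -> Prop),
    [/\ (0 < s)%N, monomial_prime p,
     (forall m : nat, (1 <= m <= s)%N ->
       forall P, Ass (ideal_pow I m.+1) P ->
         Ass (ideal_pow I m) P \/ (forall g, P g <-> p g)) &
     (forall m : nat, (s.+1 <= m)%N ->
       forall P, Ass (ideal_pow I m.+1) P -> Ass (ideal_pow I m) P)].
End Ideals.

Definition cycle_rel (N : nat) : rel 'I_N :=
  fun i j => (val j == (val i).+1 %% N)%N || (val i == (val j).+1 %% N)%N.

(* Main.v *)
Require Import Defs.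
From mathcomp Require Import all_boot all_order all_algebra.
From mathcomp Require Import mpoly.
From mathcomp Require Import zify.
From Stdlib Require Import ClassicalEpsilon Classical_Prop.
Set Implicit Arguments. Unset Strict Implicit. Unset Printing Implicit Defensive.
Import GRing.Theory.

Section Alg.
Local Open Scope ring_scope.
Variables (K : fieldType) (N : nat).
Local Notation R := {mpoly K[N]}.
Implicit Types (f g h c : R) (S I J : R -> Prop).

Definition ideal_like (I : R -> Prop) :=
  [/\ I 0, (forall f g, I f -> I g -> I (f + g)) & (forall c f, I f -> I (c * f))].

Lemma gen_sub S I : ideal_like I -> (forall g, S g -> I g) -> forall f, ideal_gen S f -> I f.
Proof.
case=> I0 ID IM SI f; elim=> [|c g f' Sg _ IH]; first exact: I0.
by apply: ID => //; apply: IM; apply: SI.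
Qed.

Lemma gen_in S g : S g -> ideal_gen S g.
Proof. by move=> Sg; rewrite -[g]add0r -[g]mul1r; apply: ideal_genD => //; apply: ideal_gen0. Qed.

Lemma gen_ideal S : ideal_like (ideal_gen S).
Proof.
split; first exact: ideal_gen0.
- move=> f g Sf; elim=> [|c g' f' Sg' _ IH]; first by rewrite addr0.
  by rewrite addrA; apply: ideal_genD.
- move=> c f; elim=> [|c' g f' Sg _ IH]; first by rewrite mulr0; apply: ideal_gen0.
  by rewrite mulrDr mulrA; apply: ideal_genD.
Qed.

Definition upc (U : 'X_{1..N} -> Prop) := forall m m', U m -> (m <= m')%MM -> U m'.
Definition ZU (U : 'X_{1..N} -> Prop) (f : R) := forall m, m \in msupp f -> U m.

Lemma ZU_ideal U : upc U -> ideal_like (ZU U).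
Proof.
move=> uU; split.
- by move=> m; rewrite msupp0.
- move=> f g Hf Hg m /msuppD_le; rewrite mem_cat => /orP[]; [exact: Hf|exact: Hg].
- move=> c f Hf m /msuppM_le /allpairsP [[m1 m2] /= [_ m2f ->]].
  by apply: (uU m2); [exact: Hf | exact: lem_addl].
Qed.

Lemma ZU_X U m : ZU U 'X_[m] <-> U m.
Proof.
split; first by move=> H; apply: H; rewrite msuppX mem_seq1.
by move=> Um m'; rewrite msuppX mem_seq1 => /eqP ->.
Qed.

Lemma ZU_gen U I : ideal_like I -> (forall m, U m -> I 'X_[m]) -> forall f, ZU U f -> I f.
Proof.
case=> I0 ID IM UI f Hf; rewrite [f]mpolyE.
have: forall m, m \in msupp f -> I (f@_m *: 'X_[m]).
  by move=> m mf; rewrite -mul_mpolyC; apply: IM; apply: UI; apply: Hf.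
elim: (msupp f) => [|m s IH] H; first by rewrite big_nil.
rewrite big_cons; apply: ID; first by apply: H; rewrite mem_head.
by apply: IH => m' m's; apply: H; rewrite in_cons m's orbT.
Qed.

Lemma X_split m m' : (m <= m')%MM -> 'X_[m'] = 'X_[m' - m] * 'X_[m] :> R.
Proof. by move=> le; rewrite -mpolyXD submK. Qed.

Definition Uedge (e : rel 'I_N) (m : 'X_{1..N}) :=
  exists i j, e i j /\ (U_(i) + U_(j) <= m)%MM.

Lemma upc_edge e : upc (Uedge e).
Proof. by move=> m m' [i [j [eij le]]] le'; exists i, j; split=> //; apply: lepm_trans le'. Qed.

Lemma edge_ZU e f : edge_ideal e f <-> ZU (Uedge e) f.
Proof.
split.
- apply: gen_sub; first exact: ZU_ideal (@upc_edge e).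
  move=> g [i [j [eij ->]]]; rewrite -mpolyXD; apply/ZU_X.
  by exists i, j; split=> //; apply: lepm_refl.
- apply: ZU_gen; first exact: gen_ideal.
  move=> m [i [j [eij le]]]; rewrite (X_split le) mpolyXD.
  case: (gen_ideal (fun h => exists i j, e i j /\ h = 'X_i * 'X_j)) => _ _ IM.
  by apply: IM; apply: gen_in; exists i, j.
Qed.

Definition Umul (U1 U2 : 'X_{1..N} -> Prop) (m : 'X_{1..N}) :=
  exists m1 m2, [/\ U1 m1, U2 m2 & (m1 + m2 <= m)%MM].

Lemma upc_mul U1 U2 : upc (Umul U1 U2).
Proof. by move=> m m' [m1 [m2 [h1 h2 le]]] le'; exists m1, m2; split=> //; apply: lepm_trans le'. Qed.

Lemma mul_ZU U1 U2 I J : upc U1 -> upc U2 ->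
  (forall f, I f <-> ZU U1 f) -> (forall f, J f <-> ZU U2 f) ->
  forall f, ideal_mul I J f <-> ZU (Umul U1 U2) f.
Proof.
move=> u1 u2 HI HJ f; split.
- apply: gen_sub; first exact: ZU_ideal (@upc_mul U1 U2).
  move=> h [f1 [g1 [If1 [Jg1 ->]]]] m /msuppM_le /allpairsP [[m1 m2] /= [m1f m2g ->]].
  exists m1, m2; split; [exact: (proj1 (HI f1) If1) | exact: (proj1 (HJ g1) Jg1) | exact: lepm_refl].
- apply: ZU_gen; first exact: gen_ideal.
  move=> m [m1 [m2 [h1 h2 le]]].
  have -> : 'X_[m] = 'X_[(m - (m1 + m2)) + m1] * 'X_[m2] :> R.
    by rewrite -mpolyXD -addmA submK.
  rewrite /ideal_mul; apply: gen_in; exists 'X_[(m - (m1 + m2)) + m1], 'X_[m2]; split; last split=> //.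
  + apply: (proj2 (HI _)); apply/ZU_X; apply: (u1 m1) => //; apply: lem_addl.
  + by apply: (proj2 (HJ _)); apply/ZU_X.
Qed.

Fixpoint Upow (e : rel 'I_N) (k : nat) : 'X_{1..N} -> Prop :=
  match k with 0 => fun _ => True | k'.+1 => Umul (Upow e k') (Uedge e) end.

Lemma upc_pow e k : upc (Upow e k).
Proof. by case: k => [|k] //=; apply: upc_mul. Qed.

Lemma pow_ZU e k f : ideal_pow (edge_ideal e) k f <-> ZU (Upow e k) f.
Proof.
elim: k f => [|k IH] f /=; first by split.
apply: mul_ZU; [exact: upc_pow | exact: upc_edge | exact: IH | exact: edge_ZU].
Qed.

Lemma pow_ideal e k : ideal_like (ideal_pow (edge_ideal e) k).
Proof.
case: (ZU_ideal (@upc_pow e k)) => h0 hD hM; split.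
- by apply/pow_ZU.
- by move=> f g /pow_ZU Hf /pow_ZU Hg; apply/pow_ZU; apply: hD.
- by move=> c f /pow_ZU Hf; apply/pow_ZU; apply: hM.
Qed.

End Alg.

Section Cyc.
Variable n : nat.
Hypothesis hn : 0 < n.
Local Notation N := n.*2.+1.

Lemma N_gt0 : 0 < N. Proof. by []. Qed.

Definition csucc (i : 'I_N) : 'I_N := Ordinal (ltn_pmod i.+1 N_gt0).
Definition cprev (i : 'I_N) : 'I_N := Ordinal (ltn_pmod (i + n.*2) N_gt0).

Lemma mod2 x : x < N + N -> x %% N = if x < N then x else x - N.
Proof.
move=> h; case: ifP => hx; first by rewrite modn_small.
have -> : x = (x - N) + N by rewrite subnK // leqNgt hx.
by rewrite modnDr modn_small ?addnK // ltn_subLR // leqNgt hx.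
Qed.

Lemma val_csucc i : (csucc i : nat) = if i.+1 < N then i.+1 else 0.
Proof.
rewrite /= mod2; last by have := ltn_ord i; lia.
by case: ifP => // h; have := ltn_ord i; lia.
Qed.

Lemma val_cprev i : (cprev i : nat) = if (i : nat) == 0 then n.*2 else i.-1.
Proof.
rewrite /= mod2; last by have := ltn_ord i; lia.
have := ltn_ord i; case: ifP => h1; case: eqP => h2 //; lia.
Qed.

Lemma ord_eq (a b : 'I_N) : (a : nat) = b -> a = b. Proof. exact: val_inj. Qed.

Lemma cprevK : cancel csucc cprev.
Proof. move=> i; apply: ord_eq; rewrite val_cprev val_csucc; have := ltn_ord i; case: (ltnP i.+1 N) => h /=; lia. Qed.

Lemma csuccK : cancel cprev csucc.
Proof.
move=> i; apply: ord_eq; rewrite val_csucc val_cprev; have := ltn_ord i.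
case: (nat_of_ord i =P 0) => h /=; first by rewrite ltnn h.
by case: ifP => h2; lia.
Qed.

Lemma csucc_inj : injective csucc. Proof. exact: can_inj cprevK. Qed.
Lemma cprev_inj : injective cprev. Proof. exact: can_inj csuccK. Qed.

Lemma cprev_neq i : (cprev i == i) = false.
Proof. apply/eqP => /(congr1 (@nat_of_ord _)); rewrite val_cprev; have := ltn_ord i; have := hn; case: ifP => /eqP h; lia. Qed.

Lemma csucc_eq_cprev i v : (csucc i == v) = (i == cprev v).
Proof. by apply/eqP/eqP => [<-|->]; rewrite ?cprevK ?csuccK. Qed.

Definition Dm (y : 'I_N -> nat) : 'X_{1..N} := [multinom (y v + y (cprev v))%N | v < N].
Lemma DmE y v : Dm y v = (y v + y (cprev v))%N. Proof. exact: mnmE. Qed.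

Definition cycM (k : nat) (m : 'X_{1..N}) :=
  exists y : 'I_N -> nat, (\sum_i y i)%N = k /\ (Dm y <= m)%MM.

Definition em (i : 'I_N) : 'X_{1..N} := (U_(i) + U_(csucc i))%MM.
Lemma emE i v : em i v = ((i == v) + (csucc i == v))%N.
Proof. by rewrite mnmDE !mnm1E. Qed.

Lemma cycM_up k m m' : cycM k m -> (m <= m')%MM -> cycM k m'.
Proof. by move=> [y [hs hl]] le; exists y; split=> //; apply: lepm_trans le. Qed.

Lemma sum_ind (i : 'I_N) : (\sum_(v < N) (v == i))%N = 1.
Proof. by rewrite (bigD1 i) //= eqxx big1 // => v /negbTE ->. Qed.

Lemma cover_bound k m (T : 'I_N -> bool) :
  (forall i, T i || T (csucc i)) -> cycM k m -> k <= \sum_(v | T v) m v.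
Proof.
move=> cov [y [<- /mnm_lepP le]].
apply: (@leq_trans (\sum_(v | T v) (y v + y (cprev v)))%N); last first.
  by apply: leq_sum => v _; rewrite -DmE.
rewrite big_split /=.
rewrite [X in (_ <= _ + X)%N](reindex_inj csucc_inj) /=.
under [X in (_ <= _ + X)%N]eq_bigr do rewrite cprevK.
rewrite (big_mkcond T) (big_mkcond (fun i => T (csucc i))) -big_split /=.
apply: leq_sum => i _; have := cov i; case: (T i); case: (T (csucc i)) => //= _; by rewrite ?addn0 ?leq_addr.
Qed.

Lemma deg_bound k m : cycM k m -> k.*2 <= mdeg m.
Proof.
move=> [y [<- /mnm_lepP le]]; rewrite mdegE.
apply: (@leq_trans (\sum_v (y v + y (cprev v)))%N); last first.
  by apply: leq_sum => v _; rewrite -DmE.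
by rewrite big_split /= (reindex_inj cprev_inj) /= addnn.
Qed.

End Cyc.

Section CycPow.
Variable n : nat.
Hypothesis hn : 0 < n.
Local Notation N := n.*2.+1.

Lemma cycle_relE (i j : 'I_N) : cycle_rel i j = (j == csucc i) || (i == csucc j).
Proof. by rewrite /cycle_rel -!val_eqE. Qed.

Lemma Upow_cycM k m : Upow (@cycle_rel N) k m <-> cycM k m.
Proof.
elim: k m => [|k IH] m /=.
  split=> // _; exists (fun _ => 0%N); split; first by rewrite big1.
  by apply/mnm_lepP => v; rewrite DmE.
split.
- move=> [m1 [m2 [/IH [y1 [s1 /mnm_lepP l1]] [i [j [eij /mnm_lepP l2]]] /mnm_lepP l3]]].
  have [i0 hi0] : exists i0 : 'I_N, forall v, ((i0 == v) + (csucc i0 == v) <= (U_(i) + U_(j))%MM v)%N.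
    move: eij; rewrite cycle_relE => /orP[] /eqP ->.
      by exists i => v; rewrite mnmDE !mnm1E.
    by exists j => v; rewrite mnmDE !mnm1E addnC.
  exists (fun v => y1 v + (v == i0))%N; split.
    by rewrite big_split /= s1 sum_ind addn1.
  apply/mnm_lepP => v; rewrite DmE.
  apply: leq_trans (l3 v); rewrite mnmDE.
  have := l1 v; have := hi0 v; rewrite DmE (csucc_eq_cprev hn) (eqtype.eq_sym v i0) (eqtype.eq_sym (cprev v) i0).
  by have := l2 v; lia.
- move=> [y [sy /mnm_lepP ly]].
  have [i0 hi0] : exists i0 : 'I_N, 0 < y i0.
    apply/existsP; apply: contraT; rewrite negb_exists => /forallP h.
    by move: sy; rewrite big1 // => v _; move: (h v); rewrite lt0n negbK => /eqP.
  exists (Dm (fun v => y v - (v == i0)))%N, (em i0); split.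
  + apply/IH; exists (fun v => y v - (v == i0))%N; split; last exact: lepm_refl.
    have: (\sum_i (y i - (i == i0)) + \sum_i (i == i0 : nat) = k.+1)%N.
      rewrite -big_split /= -sy; apply: eq_bigr => v _.
      by case: eqP => [->|]; rewrite ?subn0 ?addn0 // subnK.
    by rewrite sum_ind addn1 => -[].
  + exists i0, (csucc i0); split; first by rewrite cycle_relE eqxx.
    exact: lepm_refl.
  + apply/mnm_lepP => v; rewrite mnmDE DmE emE.
    apply: leq_trans (ly v); rewrite DmE (csucc_eq_cprev hn) (eqtype.eq_sym i0 v).
    rewrite (eqtype.eq_sym i0 (cprev v)); have cn := cprev_neq hn v.
    have [ev|nv] := eqVneq v i0.
      by subst v; rewrite ?eqxx ?cn /=; lia.
    have [ep|np] := eqVneq (cprev v) i0.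
      by rewrite ?ep ?eqxx /=; lia.
    by rewrite /=; lia.
Qed.

End CycPow.

Section PathGreedy.

Fixpoint gm (h : nat) (t : seq nat) : seq nat :=
  if t is b :: t' then minn h b :: gm (b - minn h b) t' else [::].

Fixpoint gc (h : nat) (t : seq nat) : seq bool :=
  if t is b :: t' then
    let S' := gc (b - minn h b) t' in
    if b <= h then false :: true :: behead S'
    else if head false S' then false :: S' else true :: S'
  else [:: false].

Lemma size_gm h t : size (gm h t) = size t.
Proof. by elim: t h => //= b t IH h; rewrite IH. Qed.

Lemma size_gc h t : size (gc h t) = (size t).+1.
Proof.
elim: t h => //= b t IH h; case: ifP => _ /=; first by rewrite size_behead IH.
by case: ifP => _ /=; rewrite IH.
Qed.

Definition pz (z : seq nat) j := if j is j'.+1 then nth 0 z j' else 0.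

Lemma gm_ok h t j : pz (gm h t) j + nth 0 (gm h t) j <= nth 0 (h :: t) j.
Proof.
elim: t h j => [|b t IH] h j /=.
  by case: j => [|j] //=; rewrite !nth_nil.
case: j => [|j] /=; first by rewrite geq_minl.
case: j => [|j] /=.
  by have := IH (b - minn h b) 0; rewrite /=; lia.
exact: (IH (b - minn h b) j.+1).
Qed.

Definition wt (S : seq bool) (b : seq nat) := \sum_(j < size b) nth false S j * nth 0 b j.

Lemma wt_cons s S c b : wt (s :: S) (c :: b) = s * c + wt S b.
Proof. by rewrite /wt /= big_ord_recl. Qed.

Lemma gc_wt h t : wt (gc h t) (h :: t) = sumn (gm h t).
Proof.
elim: t h => [|b t IH] h /=.
  by rewrite /wt big_ord_recl big_ord0.
have := IH (b - minn h b); have := size_gc (b - minn h b) t.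
case: (gc (b - minn h b) t) => [|s S'] //= _; rewrite wt_cons => IHs.
case: ifP => hb /=.
  have e : minn h b = b by apply/minn_idPr.
  rewrite !wt_cons; move: IHs; rewrite e subnn muln0; lia.
have e : minn h b = h by apply/minn_idPl; rewrite ltnW // ltnNge hb.
move: IHs; rewrite e; case: s => /= IHs; rewrite !wt_cons /=; move: hb; lia.
Qed.

Lemma gc_cover h t j : j < size t -> nth false (gc h t) j || nth false (gc h t) j.+1.
Proof.
elim: t h j => [|b t IH] h j //=.
have := IH (b - minn h b); have := size_gc (b - minn h b) t.
case: (gc (b - minn h b) t) => [|s S'] //= hs IHs.
case: ifP => hb.
  case: j => [|[|j]] //= hj.
  by have := IHs j.+1 hj.
case: s IHs => IHs; case: j => [|j] //= hj; exact: IHs.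
Qed.

Lemma sumn_nth s : sumn s = \sum_(j < size s) nth 0 s j.
Proof. by elim: s => [|x s IH] /=; rewrite ?big_ord0 // big_ord_recl IH. Qed.

Lemma wt_term S b j : j < size b -> nth false S j * nth 0 b j <= wt S b.
Proof. by move=> hj; rewrite /wt (bigD1 (Ordinal hj)) //= leq_addr. Qed.

End PathGreedy.

Section Konig.
Variable n : nat.
Hypothesis hn : 0 < n.
Local Notation N := n.*2.+1.

Lemma trim (y0 : 'I_N -> nat) k : k <= \sum_v y0 v ->
  exists y : 'I_N -> nat, (forall v, y v <= y0 v) /\ \sum_v y v = k.
Proof.
move e: (\sum_v y0 v - k) => s; elim: s y0 e => [|s IH] y0 e hk.
  by exists y0; split=> //; apply/eqP; rewrite eqn_leq hk -subn_eq0 e.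
have [i0 hi0] : exists i0 : 'I_N, 0 < y0 i0.
  apply/existsP; apply: contraT; rewrite negb_exists => /forallP h.
  by move: e; rewrite big1 // => v _; move: (h v); rewrite lt0n negbK => /eqP.
have hs : (\sum_v (y0 v - (v == i0)) + 1 = \sum_v y0 v)%N.
  rewrite -[1%N](sum_ind i0) -big_split /=; apply: eq_bigr => v _.
  by case: eqP => [->|]; rewrite ?subn0 ?addn0 // subnK.
have h1 : (\sum_v (y0 v - (v == i0)) - k = s)%N by lia.
have h2 : (k <= \sum_v (y0 v - (v == i0)))%N by lia.
have [y [hy1 hy2]] := IH _ h1 h2.
by exists y; split=> // v; apply: leq_trans (hy1 v) _; rewrite leq_subr.
Qed.

Lemma two_le_sum (y : 'I_N -> nat) u v : u != v -> y u + y v <= \sum_i y i.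
Proof.
move=> uv; rewrite (bigD1 u) //= (bigD1 v) /=; last by rewrite eq_sym.
by rewrite addnA leq_addr.
Qed.

Variable d : 'I_N.

Ltac solve_if := repeat (match goal with |- context [if ?b then _ else _] =>
  lazymatch b with context [if _ then _ else _] => fail | _ => case: (boolP b) => ? end end); lia.

Definition rot j : 'I_N := inord (if d + j < N then d + j else d + j - N).
Definition idx (v : 'I_N) := if d <= v then (v - d)%N else (v + N - d)%N.

Lemma val_rot j : j < N -> (rot j : nat) = if d + j < N then (d + j)%N else (d + j - N)%N.
Proof. move=> hj; have hd' := ltn_ord d; rewrite /rot inordK //; solve_if. Qed.

Lemma idx_lt v : idx v < N.
Proof. have hd' := ltn_ord d; have hv := ltn_ord v; rewrite /idx; solve_if. Qed.

Lemma idx_rot j : j < N -> idx (rot j) = j.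
Proof.
move=> hj; rewrite /idx val_rot //; have hd' := ltn_ord d; solve_if.
Qed.

Lemma rot_idx v : rot (idx v) = v.
Proof.
apply: ord_eq; rewrite val_rot ?idx_lt // /idx; have hd' := ltn_ord d; have hv := ltn_ord v.
solve_if.
Qed.

Lemma idx_d : idx d = 0.
Proof. by rewrite /idx leqnn subnn. Qed.

Lemma idx_eq0 v : (idx v == 0) = (v == d).
Proof.
apply/eqP/eqP => [h|->]; last exact: idx_d.
by rewrite -(rot_idx v) -(rot_idx d) h idx_d.
Qed.

Lemma idx_cprev v : v != d -> idx (cprev v) = (idx v).-1.
Proof.
move=> vd; have h0 : idx v != 0 by rewrite idx_eq0.
move: h0; rewrite /idx val_cprev //; have hd' := ltn_ord d; have hv := ltn_ord v.
solve_if.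
Qed.

Lemma idx_csucc v : idx (csucc v) = if (idx v).+1 < N then (idx v).+1 else 0.
Proof.
rewrite /idx val_csucc //; have hd' := ltn_ord d; have hv := ltn_ord v.
solve_if.
Qed.

Definition idxo (v : 'I_N) : 'I_N := Ordinal (idx_lt v).
Lemma idxo_inj : injective idxo.
Proof. by move=> u v /(congr1 (@nat_of_ord _)) /= e; rewrite -(rot_idx u) e rot_idx. Qed.
Definition roto (j : 'I_N) : 'I_N := rot j.
Lemma roto_inj : injective roto.
Proof. by move=> i j e; apply: ord_eq; rewrite -(idx_rot (ltn_ord i)) -(idx_rot (ltn_ord j)) /roto in e *; rewrite e. Qed.

Variables (k : nat) (a : 'X_{1..N}).
Hypothesis hd : k <= a d.

Definition tpath := [seq a (rot j) | j <- iota 1 n.*2] ++ [:: k].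

Lemma size_tpath : size tpath = N.
Proof. by rewrite size_cat size_map size_iota addn1. Qed.

Lemma nth_tpathN : nth 0 (k :: tpath) N = k.
Proof. by rewrite /= nth_cat size_map size_iota ltnn subnn. Qed.

Lemma nth_tpath j : 0 < j < N -> nth 0 (k :: tpath) j = a (rot j).
Proof.
case: j => [|j] //= hj; rewrite nth_cat size_map size_iota ifT; last lia.
by rewrite (nth_map 0) ?size_iota ?nth_iota //; lia.
Qed.

Lemma konig : ~ cycM k a ->
  exists T : 'I_N -> bool, (forall i, T i || T (csucc i)) /\ \sum_(v | T v) a v < k.
Proof.
move=> nM; set z := gm k tpath; set S := gc k tpath.
have hz : size z = N by rewrite size_gm size_tpath.
case: (leqP k (sumn z)) => hk.
  exfalso; apply: nM.
  pose y0 v := nth 0 z (idx v).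
  have sy0 : \sum_v y0 v = sumn z.
    by rewrite sumn_nth hz [RHS](reindex_inj idxo_inj).
  have lo : forall v, v != d -> Dm y0 v <= a v.
    move=> v vd; rewrite DmE /y0 idx_cprev //.
    have h0 : idx v != 0 by rewrite idx_eq0.
    have := gm_ok k tpath (idx v); rewrite nth_tpath; last by rewrite lt0n h0 idx_lt.
    rewrite rot_idx -/z; case: (idx v) h0 => [|j] //= _; by rewrite addnC.
  have [y [yle ys]] := trim (y0 := y0) (k := k) ltac:(by rewrite sy0).
  exists y; split => //; apply/mnm_lepP => v; case: (eqVneq v d) => [->|vd].
    rewrite DmE; apply: leq_trans hd; rewrite -ys two_le_sum //.
    by rewrite eq_sym cprev_neq.
  by apply: leq_trans (lo v vd); rewrite !DmE leq_add.
have hw : wt S (k :: tpath) = sumn z by rewrite gc_wt.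
have S0 : nth false S 0 = false.
  have := wt_term S (b := k :: tpath) (j := 0) isT; rewrite hw /=.
  by case: (nth false S 0) => //=; rewrite mul1n; lia.
have SN : nth false S N = false.
  have := wt_term S (b := k :: tpath) (j := N); rewrite hw nth_tpathN /= size_tpath.
  by case: (nth false S N) => //=; rewrite mul1n => /(_ (ltnSn _)); lia.
exists (fun v => nth false S (idx v)); split.
  move=> i; rewrite idx_csucc; have := gc_cover k (t := tpath) (j := idx i).
  rewrite size_tpath idx_lt -/S => /(_ isT) hc.
  have [h|h] := boolP ((idx i).+1 < N); first exact: hc.
  rewrite S0 orbF; move: hc.
  have -> : (idx i).+1 = N by have := idx_lt i; lia.
  by rewrite SN orbF.
apply: leq_ltn_trans hk; rewrite -hw /wt /= size_tpath big_ord_recr /=.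
apply: leq_trans (leq_addr _ _).
rewrite big_mkcond (reindex_inj roto_inj) /=; apply: leq_sum => j _.
rewrite /roto idx_rot //; case: j => [[|j] hj] /=; first by rewrite S0.
have e := @nth_tpath j.+1 hj; simpl in e; rewrite e.
by case: (nth false S j.+1); rewrite /= ?mul1n ?mul0n.
Qed.

End Konig.

Section Comb.
Variable n : nat.
Hypothesis hn : 0 < n.
Local Notation N := n.*2.+1.

Lemma cycM0 (m : 'X_{1..N}) : cycM 0 m.
Proof. exists (fun _ => 0%N); split; first by rewrite big1. by apply/mnm_lepP => v; rewrite DmE. Qed.

Lemma cycM_add_edge k (m : 'X_{1..N}) (e : 'I_N) j : cycM k m -> cycM (k + j) (m + em e *+ j)%MM.
Proof.
move=> [y [sy /mnm_lepP ly]]; exists (fun v => y v + j * (v == e))%N; split.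
  by rewrite big_split /= sy -big_distrr /= sum_ind muln1.
apply/mnm_lepP => v; rewrite DmE mnmDE mulmnE emE (csucc_eq_cprev hn).
have := ly v; rewrite DmE (eq_sym e v) (eq_sym e (cprev v)); lia.
Qed.

Lemma cycM_edge (e : 'I_N) : cycM 1 (em e).
Proof. by have := cycM_add_edge (k := 0) (m := 0%MM) e 1 (cycM0 _); rewrite add0m mulm1n. Qed.

Lemma sum_even m : (\sum_(j < m.*2.+1) (~~ odd j : nat) = m.+1)%N.
Proof.
elim: m => [|m IH]; first by rewrite big_ord_recr big_ord0.
rewrite doubleS big_ord_recr big_ord_recr /= IH odd_double /=; lia.
Qed.

Definition ones : 'X_{1..N} := [multinom 1%N | _ < N].

Lemma mdeg_ones : mdeg ones = N.
Proof. by rewrite mdegE (eq_bigr (fun _ => 1%N)) ?sum1_card ?card_ord // => i _; rewrite mnmE. Qed.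

Lemma mdeg_em (e : 'I_N) : mdeg (em e) = 2.
Proof. by rewrite /em mdegD !mdeg1. Qed.

Lemma cyc_max (i : 'I_N) : cycM n.+1 (ones + U_(i))%MM.
Proof.
pose y v := (~~ odd (idx i v) : nat).
exists y; split.
  rewrite (reindex_inj (roto_inj hn (d := i))) /=.
  rewrite -(sum_even n); apply: eq_bigr => j _; by rewrite /y /roto (idx_rot hn).
apply/mnm_lepP => v; rewrite DmE mnmDE mnm1E mnmE /y.
have [->|vi] := eqVneq v i.
  rewrite idx_d /=.
  have h : idx i (cprev i) = n.*2.
    have := idx_csucc hn i (cprev i); rewrite (csuccK hn) idx_d.
    have := idx_lt hn i (cprev i); case: ifP => //; lia.
  by rewrite h odd_double.
rewrite (idx_cprev hn) //.
have : idx i v != 0 by rewrite (idx_eq0 hn).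
by case: (idx i v) => [|j] //= _; case: (odd j).
Qed.

Lemma cover_nonempty (T : 'I_N -> bool) : (forall i, T i || T (csucc i)) -> exists c, T c.
Proof. by move=> cov; have := cov ord0; case/orP => h; [exists ord0 | exists (csucc ord0)]. Qed.

Lemma cycM_sat (T : 'I_N -> bool) k (m1 m2 : 'X_{1..N}) :
  (forall v, T v -> m1 v = 0%N) -> (forall v, ~~ T v -> k <= m2 v) ->
  cycM k (m1 + m2)%MM -> cycM k m2.
Proof.
move=> h1 h2 [y [sy /mnm_lepP ly]]; exists y; split=> //; apply/mnm_lepP => v.
case: (boolP (T v)) => tv.
  by have := ly v; rewrite mnmDE h1.
apply: leq_trans (h2 v tv); rewrite DmE -sy two_le_sum //.
by rewrite eq_sym cprev_neq.
Qed.

End Comb.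

Section Alg2.
Local Open Scope ring_scope.
Variables (K : fieldType) (n : nat).
Hypothesis hn : (0 < n)%N.
Local Notation N := n.*2.+1.
Local Notation R := {mpoly K[N]}.
Local Notation Ipow := (ideal_pow (edge_ideal (K := K) (@cycle_rel N))).

Lemma ideal_of_prime (P : R -> Prop) : is_prime P -> ideal_like P.
Proof. by case=> [[h0 [hD hM]] _]; split. Qed.

Lemma Ipow_char k (f : R) : Ipow k f <-> (forall m, m \in msupp f -> cycM k m).
Proof.
rewrite pow_ZU; split=> H m /H; by move/(Upow_cycM hn).
Qed.

Lemma Ipow_like k : ideal_like (Ipow k).
Proof. exact: pow_ideal. Qed.

Lemma supp_MX (f : R) m w : w \in msupp (f * 'X_[m]) <-> exists2 t, t \in msupp f & w = (m + t)%MM.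
Proof.
rewrite (perm_mem (msuppMX f m)); split.
  by case/mapP => t ht ->; exists t.
by case=> t ht ->; apply/mapP; exists t.
Qed.

Lemma in_supp_MX (f : R) m t : t \in msupp f -> (m + t)%MM \in msupp (f * 'X_[m]).
Proof. by rewrite !mcoeff_msupp mcoeffMX. Qed.

Definition Mx (g : R) := g@_0%MM = 0.

Lemma Mx_like : ideal_like Mx.
Proof.
split; rewrite /Mx.
- exact: mcoeff0.
- by move=> f g hf hg; rewrite mcoeffD hf hg addr0.
- by move=> c f hf; rewrite (rmorphM (mcoeff 0%MM)) /= hf mulr0.
Qed.

Lemma mnm_nz (m : 'X_{1..N}) : m != 0%MM -> exists i, (0 < m i)%N.
Proof.
move=> nz; apply/existsP; apply: contraR nz; rewrite negb_exists => /forallP h.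
by apply/eqP/mnmP => i; rewrite mnm0E; move: (h i); rewrite lt0n negbK => /eqP.
Qed.

Lemma X_var (m : 'X_{1..N}) i : (0 < m i)%N -> 'X_[m] = 'X_[m - U_(i)] * 'X_i :> R.
Proof. by move=> h; apply: X_split; rewrite lep1mP -lt0n. Qed.

Lemma Mx_ZU (g : R) : Mx g -> ZU (fun m => m != 0%MM) g.
Proof.
move=> hg m; rewrite mcoeff_msupp; apply: contra_neq => ->; exact: hg.
Qed.

Lemma Mx_sub (P : R -> Prop) : ideal_like P -> (forall i, P 'X_i) -> forall g, Mx g -> P g.
Proof.
move=> hP hX g /Mx_ZU; apply: ZU_gen => // m /mnm_nz [i hi].
by rewrite (X_var hi); case: hP => _ _ hM; apply: hM.
Qed.

Definition Mgen : R -> Prop := ideal_gen (fun h => exists2 i, i \in [set: 'I_N] & h = 'X_i).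

Lemma Mgen_Mx g : Mgen g <-> Mx g.
Proof.
split.
  apply: gen_sub; first exact: Mx_like.
  by move=> h [i _ ->]; rewrite /Mx mcoeffX mnm1_eq0.
apply: Mx_sub; first exact: gen_ideal.
by move=> i; apply: gen_in; exists i; rewrite ?in_setT.
Qed.

Lemma Mx_prime : is_prime Mx.
Proof.
split; first by case: Mx_like => h0 hD hM; split=> //; split.
split; first by rewrite /Mx mcoeff1 eqxx => /eqP; rewrite oner_eq0.
by move=> f g; rewrite /Mx (rmorphM (mcoeff 0%MM)) /= => /eqP; rewrite mulf_eq0 => /orP[] /eqP; [left|right].
Qed.

Lemma prime_X (P : R -> Prop) m : is_prime P -> P 'X_[m] -> exists i, (0 < m i)%N /\ P 'X_i.
Proof.
move=> hP; move e: (mdeg m) => s; elim: s m e => [|s IH] m e.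
  move/eqP: e; rewrite mdeg_eq0 => /eqP ->; rewrite mpolyX0.
  by case: hP => _ [].
have : m != 0%MM by rewrite -mdeg_eq0 e.
move=> /mnm_nz [i hi]; rewrite (X_var hi).
case: hP => _ [_ hpr] /hpr [hm|hx]; last by exists i.
have e' : mdeg (m - U_(i)) = s.
  have := mdegD (m - U_(i)) U_(i); rewrite submK ?lep1mP -?lt0n // mdeg1 e; lia.
have [j [hj hPj]] := IH _ e' hm; exists j; split=> //.
by move: hj; rewrite mnmBE; lia.
Qed.

Definition filt (B : pred 'X_{1..N}) (p : R) : R :=
  \sum_(m <- msupp p | B m) p@_m *: 'X_[m].

Lemma filt_seqE (B : pred 'X_{1..N}) (c : 'X_{1..N} -> K) (r : seq 'X_{1..N}) w :
  uniq r -> (\sum_(m <- r | B m) c m *: 'X_[m] : R)@_w = if (w \in r) && B w then c w else 0.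
Proof.
elim: r => [|x r IH] /=; first by rewrite big_nil mcoeff0.
case/andP => xr ur; move: (IH ur) => {}IH; rewrite big_cons in_cons.
have [ew|wx] := eqVneq w x.
  subst w; rewrite /= (negbTE xr) /= in IH *.
  by case: (B x); rewrite ?mcoeffD ?mcoeffZ ?mcoeffX ?eqxx ?mulr1 IH ?addr0.
rewrite /=; case: (B x); rewrite ?mcoeffD ?mcoeffZ ?mcoeffX IH //.
by rewrite eq_sym (negbTE wx) mulr0 add0r.
Qed.

Lemma filtE B (p : R) w : (filt B p)@_w = if B w then p@_w else 0.
Proof.
rewrite /filt filt_seqE ?msupp_uniq //.
case: (boolP (w \in msupp p)) => h; first by rewrite andTb.
by rewrite andFb; case: (B w) => //; move: h; rewrite mcoeff_msupp negbK => /eqP.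
Qed.

Definition cycMb k (m : 'X_{1..N}) : bool :=
  if excluded_middle_informative (cycM k m) then true else false.
Lemma cycMbP k m : cycMb k m <-> cycM k m.
Proof. by rewrite /cycMb; case: excluded_middle_informative. Qed.

End Alg2.

Section Claims.
Local Open Scope ring_scope.
Variables (K : fieldType) (n : nat).
Hypothesis hn : (0 < n)%N.
Local Notation N := n.*2.+1.
Local Notation R := {mpoly K[N]}.
Local Notation Ipow := (ideal_pow (edge_ideal (K := K) (@cycle_rel N))).

Lemma ass_max (m : nat) (hm : (n < m)%N) (P : R -> Prop) :
  is_prime P -> (forall g, P g <-> Mx g) -> Ass (Ipow m) P.
Proof.
move=> hP hPM; split=> //.
pose wM := (ones n + em (ord0 : 'I_N) *+ (m - n.+1))%MM.
exists 'X_[wM] => g; rewrite hPM; split.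
- move=> hg; apply/(Ipow_char hn) => w /supp_MX [t ht ->].
  have tnz : t != 0%MM by apply: contraTneq ht => ->; rewrite mcoeff_msupp hg eqxx.
  have [i hi] := mnm_nz tnz.
  have := cycM_add_edge hn ord0 (m - n.+1) (cyc_max hn i).
  have -> : (n.+1 + (m - n.+1) = m)%N by lia.
  move=> h; apply: cycM_up h _; apply/mnm_lepP => v; rewrite !mnmDE mulmnE mnm1E.
  by case: eqP => [<-|_]; lia.
- move=> hI; apply/eqP; apply: contraT => nz.
  have : (wM + 0)%MM \in msupp (g * 'X_[wM]) by apply: in_supp_MX; rewrite mcoeff_msupp.
  move/(proj1 (Ipow_char hn _ _) hI) => /(deg_bound hn).
  by rewrite addm0 mdegD mdegMn mdeg_em mdeg_ones; lia.
Qed.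

Section MinPrime.
Variable T : 'I_N -> bool.
Hypothesis cov : forall i, T i || T (csucc i).
Hypothesis mn : forall c, T c -> ~~ T (csucc c) || ~~ T (cprev c).

Lemma nbr_edge c : T c -> exists e d, ~~ T d /\ forall v, em e v = ((c == v) + (d == v))%N.
Proof.
move=> tc; case/orP: (mn tc) => h.
  by exists c, (csucc c); split=> // v; rewrite emE.
exists (cprev c), (cprev c); split=> // v; rewrite emE (csuccK hn); lia.
Qed.

Definition Qc (g : R) := ZU (fun m => exists c, T c /\ (0 < m c)%N) g.

Lemma ass_min j (hj : (0 < j)%N) (P : R -> Prop) :
  is_prime P -> (forall g, P g <-> Qc g) -> Ass (Ipow j) P.
Proof.
move=> hP hPQ; split=> //.
have [c0 tc0] := cover_nonempty cov.
have [e0 [d0 [td0 he0]]] := nbr_edge tc0.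
pose Dall : 'X_{1..N} := [multinom (~~ T v : nat) | v < N].
pose wC := (Dall + em e0 *+ j.-1)%MM.
exists 'X_[wC] => g; rewrite hPQ; split.
- move=> hg; apply/(Ipow_char hn) => w /supp_MX [t ht ->].
  have [c [tc hc]] := hg t ht.
  have [e [d [td hed]]] := nbr_edge tc.
  have := cycM_add_edge hn e0 j.-1 (cycM_edge hn e).
  rewrite add1n prednK // => h; apply: cycM_up h _; apply/mnm_lepP => v.
  rewrite (mnmDE v (em e)) hed !mnmDE mulmnE /Dall mnmE.
  have cd : c != d by apply: contraNneq td => <-.
  case: (c =P v) => [ec|_]; case: (d =P v) => [ed|_] /=.
  + by move: cd; rewrite ec ed eqxx.
  + by rewrite -ec; move: hc; lia.
  + by rewrite -ed td; lia.
  + lia.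
- move=> hI t ht; apply: NNPP => nt.
  have ht0 : forall v, T v -> t v = 0%N.
    move=> v tv; apply/eqP; rewrite -leqn0 leqNgt; apply/negP => h; apply: nt; by exists v.
  have hc := proj1 (Ipow_char hn _ _) hI _ (in_supp_MX wC ht).
  have := cover_bound hn cov hc.
  have : (\sum_(v | T v) (wC + t)%MM v <= j.-1)%N.
    apply: (@leq_trans (\sum_(v | T v) (j.-1 * (v == c0)))%N).
      apply: leq_sum => v tv; rewrite !mnmDE mulmnE he0 mnmE tv ht0 //=.
      have : (d0 == v) = false by apply: contraNF td0 => /eqP ->.
      by move=> ->; rewrite (eq_sym c0 v); case: (v == c0) => /=; lia.
    apply: (@leq_trans (\sum_v (j.-1 * (v == c0)))%N).
      by rewrite big_mkcond /=; apply: leq_sum => v _; case: (T v).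
    by rewrite -big_distrr /= sum_ind muln1.
  have : (j.-1 < j)%N by rewrite prednK.
  lia.
Qed.

End MinPrime.

Lemma ass_class k (hk : (0 < k)%N) (P : R -> Prop) : Ass (Ipow k) P ->
  (forall g, P g <-> Mx g) \/ (forall j, (0 < j)%N -> Ass (Ipow j) P).
Proof.
move=> [hP [f hf]].
have hPl := ideal_of_prime hP; case: (hPl) => P0 PD PM.
have [T hT] : exists T : 'I_N -> bool, forall v, T v <-> P 'X_v.
  exists (fun v => if excluded_middle_informative (P 'X_v) then true else false) => v.
  by case: excluded_middle_informative.
have QP : forall g, Qc T g -> P g.
  apply: ZU_gen => // m [c [tc hc]].
  by rewrite (X_var K hc); apply: PM; apply/hT.
case: (boolP [forall v, T v]) => [/forallP allT | /forallPn [v0 nv0]].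
  have XP : forall i, P 'X_i by move=> i; apply/hT.
  left => g; split; last exact: (Mx_sub hPl XP).
  move=> Pg; set c := g@_0%MM.
  have h1 : Mx (g - c%:MP) by rewrite /Mx mcoeffB mcoeffC eqxx mulr1 subrr.
  have h2 : P (g - c%:MP) := Mx_sub hPl XP h1.
  have h3 : P c%:MP.
    have -> : c%:MP = g + (-1) * (g - c%:MP) by rewrite mulN1r opprB addrC subrK.
    by apply: PD => //; apply: PM.
  apply/eqP; apply: contraT => cnz; case: hP => _ [hP1 _]; exfalso; apply: hP1.
  have -> : (1 : R) = (c^-1)%:MP * c%:MP by rewrite -mpolyCM mulVf // mpolyC1.
  by apply: PM.
right.
pose mu : 'X_{1..N} := [multinom (if T v then 0 else k)%N | v < N].
have Xmu : ~ P 'X_[mu].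
  by move/(prime_X hn hP) => [i [hi /hT Ti]]; move: hi; rewrite mnmE Ti.
have nI : ~ Ipow k ('X_[mu] * f) by move=> h; apply: Xmu; apply/hf.
have [t [ht nct]] : exists t, t \in msupp f /\ ~ cycM k (mu + t)%MM.
  apply: NNPP => hne; apply: nI; apply/(Ipow_char hn) => w; rewrite mulrC => /supp_MX [t ht ->].
  by apply: NNPP => hc; apply: hne; exists t.
set a := (mu + t)%MM.
have cT : forall c, T c -> cycM k (U_(c) + a)%MM.
  move=> c tc; have : P 'X_[U_(c) + mu].
    by rewrite mpolyXD mulrC; apply: PM; apply/hT.
  move/hf/(Ipow_char hn); rewrite /a addmA; apply; rewrite mulrC; exact: in_supp_MX.
have aD : forall v, ~~ T v -> (k <= a v)%N.
  by move=> v nv; rewrite /a mnmDE mnmE (negbTE nv) leq_addr.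
have cov : forall i, T i || T (csucc i).
  move=> i; apply: contraT; rewrite negb_or => /andP [ni nsi]; exfalso; apply: nct.
  have := cycM_add_edge hn i k (cycM0 0%MM); rewrite add0m add0n => h.
  apply: cycM_up h _; apply/mnm_lepP => v; rewrite mulmnE emE.
  have h1 := aD i ni; have h2 := aD _ nsi; have := cprev_neq hn (csucc i); rewrite (cprevK hn) => h3.
  have [e|iv] := eqVneq i v.
    by subst v; rewrite eq_sym h3 /= addn0 mul1n.
  have [e|sv] := eqVneq (csucc i) v.
    by subst v; rewrite /= mul1n.
  by [].
have mn : forall c, T c -> ~~ T (csucc c) || ~~ T (cprev c).
  move=> c tc; apply: contraT; rewrite negb_or !negbK => /andP [ts tp].
  have [S [covS wS]] := konig hn (d := v0) (k := k) (a := a) (aD v0 nv0) nct.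
  case: (boolP [exists v, T v && ~~ S v]) => [/existsP [v /andP [tv nsv]] | /existsPn allS].
    have := cover_bound hn covS (cT v tv).
    have -> : (\sum_(u | S u) (U_(v) + a)%MM u = \sum_(u | S u) a u)%N.
      apply: eq_bigr => u su; rewrite mnmDE mnm1E.
      by have -> : (v == u) = false by apply: contraNF nsv => /eqP ->.
    by move: wS; lia.
  have SofT : forall v, T v -> S v by move=> v tv; have := allS v; rewrite tv /= negbK.
  pose S' u := S u && (u != c).
  have covS' : forall i, S' i || S' (csucc i).
    move=> i; rewrite /S'; have [->|ic] := eqVneq i c.
      rewrite SofT //= (SofT _ ts) /=; have := cprev_neq hn (csucc c); rewrite (cprevK hn) => h; by rewrite eq_sym h.
    have [e|sc] := eqVneq (csucc i) c.
      have -> : i = cprev c by rewrite -e cprevK.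
      by rewrite SofT.
    by have := covS i; rewrite !andbT.
  have := cover_bound hn covS' (cT c tc).
  have : (\sum_(u | S' u) (U_(c) + a)%MM u <= \sum_(u | S u) a u)%N.
    rewrite big_mkcond [X in (_ <= X)%N]big_mkcond; apply: leq_sum => u _.
    rewrite /S' mnmDE mnm1E; case: (S u) => //=.
    by case: (eqVneq u c) => [->|uc] //=; rewrite eq_sym (negbTE uc).
  by move: wS; lia.
have PQ : forall g, P g -> Qc T g.
  move=> g Pg; apply: NNPP => nQ.
  pose dO := fun m : 'X_{1..N} => [forall c, T c ==> (m c == 0%N)].
  pose g0 := filt dO g.
  have hg1 : Qc T (g - g0).
    move=> m; rewrite mcoeff_msupp mcoeffB filtE.
    case: (boolP (dO m)) => hd; first by rewrite subrr eqxx.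
    move=> _; move/forallPn: hd => [c]; rewrite negb_imply => /andP [tc hc].
    by exists c; split=> //; rewrite lt0n.
  have Pg0 : P g0.
    have -> : g0 = g + (-1) * (g - g0) by rewrite mulN1r opprB addrC subrK.
    by apply: PD => //; apply: PM; apply: QP.
  have [m0 [hm0 nm0]] : exists m0, m0 \in msupp g /\ ~ (exists c, T c /\ (0 < m0 c)%N).
    apply: NNPP => h; apply: nQ => m hm; apply: NNPP => h'; apply: h; by exists m.
  have dm0 : dO m0.
    apply/forallP => c; apply/implyP => tc; rewrite -leqn0 leqNgt; apply/negP => h.
    by apply: nm0; exists c.
  have g0nz : g0 != 0.
    apply: contraTneq hm0 => e; have := filtE dO g m0; rewrite dm0 -/g0 e mcoeff0 => h.
    by rewrite mcoeff_msupp -h eqxx.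
  set F := f * 'X_[mu].
  have I0 : Ipow k (g0 * F).
    have := proj1 (hf g0) Pg0; case: (Ipow_like K n k) => _ _ IM.
    move=> h; have -> : g0 * F = 'X_[mu] * (g0 * f) by rewrite /F mulrA [RHS]mulrC.
    exact: IM.
  pose bad := fun m : 'X_{1..N} => ~~ cycMb k m.
  pose FB := filt bad F.
  have FBnz : FB != 0.
    apply/eqP => e; have := congr1 (mcoeff (mu + t)%MM) e.
    rewrite filtE mcoeff0 /bad /F mcoeffMX.
    have -> : cycMb k (mu + t)%MM = false by apply/negP => /cycMbP.
    by move=> /= ft; move: ht; rewrite mcoeff_msupp ft eqxx.
  have [w hw] : exists w, w \in msupp (g0 * FB).
    case e: (msupp (g0 * FB)) => [|w s]; last by exists w; rewrite ?e mem_head.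
    by move/msuppnil0: e => /eqP; rewrite mulf_eq0 (negbTE g0nz) (negbTE FBnz).
  have wbad : ~ cycM k w.
    move: hw => /msuppM_le /allpairsP [[m1 m2] /= [h1 h2 ->]] hc.
    have d1 : dO m1 by move: h1; rewrite mcoeff_msupp /g0 filtE; case: (dO m1); rewrite ?eqxx.
    have [b2 f2] : bad m2 /\ F@_m2 != 0.
      by move: h2; rewrite mcoeff_msupp /FB filtE; case: (bad m2); rewrite ?eqxx.
    move: f2; rewrite -mcoeff_msupp /F => /supp_MX [t' _ e2].
    move: b2; rewrite /bad => /negP; apply; apply/cycMbP.
    apply: (cycM_sat hn (T := T) (m1 := m1)) hc.
      by move=> v tv; apply/eqP; move/forallP: d1 => /(_ v); rewrite tv.
    by move=> v nv; rewrite e2 mnmDE mnmE (negbTE nv) leq_addr.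
  have g0FG : (g0 * (F - FB))@_w = 0.
    apply/eqP; apply: contraT => nz.
    have : w \in msupp (g0 * (F - FB)) by rewrite mcoeff_msupp.
    move/msuppM_le/allpairsP => [[m1 m2] /= [h1 h2 ew]].
    move: h2; rewrite mcoeff_msupp mcoeffB /FB filtE /bad.
    case: (boolP (cycMb k m2)) => hb /=; last by rewrite subrr eqxx.
    move=> _; exfalso; apply: wbad; rewrite ew; apply: cycM_up (proj1 (cycMbP _ _) hb) _.
    exact: lem_addl.
  apply: wbad; apply: (proj1 (Ipow_char hn _ _) I0); rewrite mcoeff_msupp.
  have -> : g0 * F = g0 * FB + g0 * (F - FB) by rewrite -mulrDr addrC subrK.
  by rewrite mcoeffD g0FG addr0 -mcoeff_msupp.
move=> j hj; apply: (ass_min cov mn hj hP) => g; split; [exact: PQ | exact: QP].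
Qed.

End Claims.

Lemma prime_ext (K : fieldType) (N : nat) (P Q : {mpoly K[N]} -> Prop) :
  (forall g, P g <-> Q g) -> is_prime Q -> is_prime P.
Proof.
move=> e [[h0 [hD hM]] [h1 hp]]; split; first split; last split.
- by apply/e.
- split; first by move=> f g /e hf /e hg; apply/e; apply: hD.
  by move=> c f /e hf; apply/e; apply: hM.
- by move/e.
- by move=> f g /e /hp [] /e; [left|right].
Qed.

Theorem corollary4p6 (K : fieldType) (n : nat) (hn : (1 <= n)%N) :
  nearly_copersistent (edge_ideal (K := K) (@cycle_rel n.*2.+1)).
Proof.
exists n, (@Mgen K n); split => //.
- split; first exact: (prime_ext (@Mgen_Mx K n) (@Mx_prime K n)).
  by exists [set: 'I_n.*2.+1].
- move=> m /andP [hm1 hm2] P hass.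
  case: (ass_class hn (k := m.+1) isT hass) => [h|h].
    by right => g; rewrite h Mgen_Mx.
  by left; apply: h.
- move=> m hm P hass.
  case: (ass_class hn (k := m.+1) isT hass) => [h|h].
    by apply: (ass_max hn (m := m)) => //; case: hass.
  by apply: h; lia.
Qed.
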